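(* Under the setting in the context (in particular $\hat\tau$ permutation-invariant), for every subset $\mathcal S_u\subseteq\mathcal U$, every $j\in\mathcal S_u$ and every $k\in\mathcal C$, $$\mathbb E\Big[\frac{\mathbf 1\{R_j>\mathcal Q_j,\ T_k\le\hat\tau,\ \hat{\mathcal S}_u=\mathcal S_u\}}{\sum_{i\in\mathcal C\cup\{j\}}\mathbf 1\{T_i\le\hat\tau\}}\Big]=\mathbb E\Big[\frac{\mathbf 1\{R_k>\mathcal Q_j,\ T_k\le\hat\tau,\ \hat{\mathcal S}_u=\mathcal S_u\}}{\sum_{i\in\mathcal C\cup\{j\}}\mathbf 1\{T_i\le\hat\tau\}}\Big],$$ where $\mathcal Q_j$ is the $\lceil(1-\alpha)(|\hat{\mathcal S}_c|+1)\rceil$-th smallest value of $\{R_i: i\in\hat{\mathcal S}_c\cup\{j\}\}$.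
   Context: Setting: $\hat\mu,g:\mathbb R^d\to\mathbb R$ fixed deterministic measurable functions; calibration indices $\mathcal C$ ($|\mathcal C|=n$) and disjoint test indices $\mathcal U$ ($|\mathcal U|=m$); $(X_i,Y_i)$, $i\in\mathcal C\cup\mathcal U$, i.i.d.; $T_i=g(X_i)$, $R_i=|Y_i-\hat\mu(X_i)|$; $\alpha\in(0,1)$. The threshold is $\hat\tau=\tau(T_i:i\in\mathcal C\cup\mathcal U)$ for a deterministic measurable $\tau:\mathbb R^{n+m}\to\mathbb R$ invariant under permutations of its arguments; $\hat{\mathcal S}_u=\{i\in\mathcal U:T_i\le\hat\tau\}$ and $\hat{\mathcal S}_c=\{i\in\mathcal C:T_i\le\hat\tau\}$. On the event $\hat{\mathcal S}_u=\mathcal S_u\ni j$ the denominator is at least $1$. *)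

(* Defs.v *)
From HB Require Import structures.
From mathcomp Require Import all_boot all_order all_algebra.
From mathcomp Require Import all_classical all_reals all_analysis.
Set Implicit Arguments. Unset Strict Implicit. Unset Printing Implicit Defensive.
Import Order.TTheory GRing.Theory Num.Theory.
Local Open Scope classical_set_scope.
Local Open Scope ring_scope.

Section defs.
Context {R : realType} {dO : measure_display} {Omega : measurableType dO}.

(* Mutual independence of a finite family of random elements Z_i
   (product rule for every family of measurable sets; taking B_i = setT
   recovers every finite subfamily). *)
Definition mutually_independent {dT} {T : measurableType dT} (N : nat)
    (P : probability Omega R) (Z : 'I_N -> Omega -> T) : Prop :=
  forall B : 'I_N -> set T, (forall i, measurable (B i)) ->
    P (\bigcap_(i in [set: 'I_N]) (Z i @^-1` B i)) =
    (\prod_(i < N) P (Z i @^-1` B i))%E.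

Definition identically_distributed {dT} {T : measurableType dT} (N : nat)
    (P : probability Omega R) (Z : 'I_N -> Omega -> T) : Prop :=
  forall i j : 'I_N, forall B : set T, measurable B ->
    P (Z i @^-1` B) = P (Z j @^-1` B).

Definition iid {dT} {T : measurableType dT} (N : nat)
    (P : probability Omega R) (Z : 'I_N -> Omega -> T) : Prop :=
  (forall i, measurable_fun setT (Z i)) /\
  mutually_independent P Z /\ identically_distributed P Z.

(* threshold hat tau = tau(T_i : i in C u U), indices C u U = 'I_N *)
Definition tauhat (N : nat) (tau : N.-tuple R -> R) (T : 'I_N -> Omega -> R)
  (w : Omega) : R := tau [tuple T i w | i < N].

Definition Shat (N : nat) (tau : N.-tuple R -> R) (T : 'I_N -> Omega -> R)
  (A : {set 'I_N}) (w : Omega) : {set 'I_N} :=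
  [set i in A | T i w <= tauhat tau T w].

Definition kth_smallest (k : nat) (s : seq R) : R := nth 0 (sort <=%R s) k.-1.

Definition Qj (N : nat) (alpha : R) (tau : N.-tuple R -> R)
  (T Rs : 'I_N -> Omega -> R) (C : {set 'I_N}) (j : 'I_N) (w : Omega) : R :=
  let Sc := Shat tau T C w in
  kth_smallest `|Num.ceil ((1 - alpha) * (#|Sc|%:R + 1))|%N
    [seq Rs i w | i in j |: Sc].

End defs.

(* Main.v *)
Require Import Defs.
From HB Require Import structures.
From mathcomp Require Import all_boot all_order all_algebra.
From mathcomp Require Import all_classical all_reals all_analysis.
From mathcomp Require Import fingroup perm measurable_realfun.
Import Order.TTheory GRing.Theory Num.Theory.
Local Open Scope classical_set_scope.
Local Open Scope ring_scope.
Section Comb.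
Context {R : realType}.

Lemma kth_lt (s : seq R) p (x : R) : (p < size s)%N ->
  (nth 0 (sort <=%R s) p < x) = (p < count (fun y : R => (y < x)%R) s)%N.
Proof.
move=> ps.
have -> : count (fun y => y < x) s = count (fun y => y < x) (sort <=%R s).
  by apply/esym/seq.permP; rewrite perm_sort.
have st : sorted <=%R (sort <=%R s) by apply: sort_sorted; exact: le_total.
set t := sort <=%R s in st *.
have pt : (p < size t)%N by rewrite size_sort.
have mono : forall i, (i <= p)%N -> nth 0 t i <= nth 0 t p.
  move=> i ip; apply: (sorted_leq_nth le_trans lexx) => //; rewrite inE.
  exact: leq_ltn_trans ip pt.
have mono2 : forall i, (p <= i)%N -> (i < size t)%N -> nth 0 t p <= nth 0 t i.
  move=> i ip it; apply: (sorted_leq_nth le_trans lexx) => //.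
apply/idP/idP => [H|].
  rewrite -(cat_take_drop p.+1 t) count_cat.
  have st1 : size (take p.+1 t) = p.+1 by rewrite size_takel.
  have : all (fun y => y < x) (take p.+1 t).
    apply/(all_nthP 0) => i; rewrite st1 => ip1.
    rewrite nth_take //; exact: le_lt_trans (mono _ ip1) H.
  rewrite all_count => /eqP ->; rewrite st1.
  by rewrite ltnS leq_addr.
apply: contraLR; rewrite -!leqNgt -real_leNgt ?num_real // => H.
rewrite -(cat_take_drop p t) count_cat.
have : ~~ has (fun y => y < x) (drop p t).
  apply/hasPn => y /(nthP 0) [i]; rewrite size_drop ltn_subRL => it <-.
  rewrite nth_drop -real_leNgt ?num_real //.
  by apply: le_trans H _; apply: mono2; rewrite ?leq_addr // addnC.
rewrite has_count -leqNgt leqn0 => /eqP ->; rewrite addn0.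
by apply: leq_trans (count_size _ _) _; rewrite size_take; case: ifP => // /negbT; rewrite -leqNgt.
Qed.
End Comb.
Definition integ {R : realType} {dO} {Om : measurableType dO} {N : nat} (alpha : R)
  (tau : N.-tuple R -> R) (T Rs : 'I_N -> Om -> R) (C U Su : {set 'I_N})
  (j k a : 'I_N) (w : Om) : R :=
  ((((Rs a w > Qj alpha tau T Rs C j w)%R && (T k w <= tauhat tau T w)%R
      && (Shat tau T U w == Su)) : bool)%:R /
   \sum_(i in j |: C) ((T i w <= tauhat tau T w)%R : bool)%:R).

Lemma perm_map_perm N (s : seq 'I_N) (sg : {perm 'I_N}) :
  uniq s -> (forall x, (sg x \in s) = (x \in s)) -> perm_eq (map sg s) s.
Proof.
move=> us H; apply: uniq_perm => //; first by rewrite map_inj_uniq //; exact: perm_inj.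
move=> x; apply/mapP/idP => [[y ys ->]|xs]; first by rewrite H.
by exists (sg^-1 x)%g; rewrite ?permKV // -H permKV.
Qed.

Lemma tperm_mem N (A : {set 'I_N}) j k x : j \in A -> k \in A ->
  (tperm j k x \in A) = (x \in A).
Proof. by move=> jA kA; case: tpermP => [->|->|] //; rewrite jA kA. Qed.

Section Swap.
Context {R : realType} {dO : measure_display} {Om : measurableType dO}.

Lemma integ_swap N (alpha : R) (tau : N.-tuple R -> R) (T Rs : 'I_N -> Om -> R)
  (C U Su : {set 'I_N}) j k w :
  (forall s s' : N.-tuple R, perm_eq s s' -> tau s = tau s') ->
  j \in U -> k \in C -> j \in Su ->
  integ alpha tau (fun i => T (tperm j k i)) (fun i => Rs (tperm j k i)) C U Su j k j w =
  integ alpha tau T Rs C U Su j k k w.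
Proof.
move=> tauP jU kC jSu.
set sg := tperm j k.
have thE : tauhat tau (fun i => T (sg i)) w = tauhat tau T w.
  apply: tauP => /=; rewrite /= (map_comp (fun i => T i w) sg).
  apply: perm_map; apply: perm_map_perm; first exact: enum_uniq.
  by move=> x; rewrite !mem_enum.
have jA : j \in j |: C by rewrite setU11.
have kA : k \in j |: C by rewrite setU1r.
rewrite /integ thE.
have denE : \sum_(i in j |: C) ((T (sg i) w <= tauhat tau T w)%R : bool)%:R =
            \sum_(i in j |: C) ((T i w <= tauhat tau T w)%R : bool)%:R :> R.
  rewrite [RHS](reindex_inj (@perm_inj _ sg)) /=.
  by apply: eq_bigl => i; rewrite tperm_mem.
rewrite denE; congr ((nat_of_bool _)%:R / _).
set th := tauhat tau T w.
have [/andP[Tj Tk]|nT] := boolP ((T j w <= th) && (T k w <= th)).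
  have Hall : forall i, (T (sg i) w <= th) = (T i w <= th).
    by move=> i; rewrite /sg; case: tpermP => [->|->|]; rewrite ?Tj ?Tk.
  have ShatE : forall A, Shat tau (fun i => T (sg i)) A w = Shat tau T A w.
    by move=> A; apply/setP => i; rewrite !inE thE Hall.
  have QE : Qj alpha tau (fun i => T (sg i)) (fun i => Rs (sg i)) C j w =
            Qj alpha tau T Rs C j w.
    rewrite /Qj /= ShatE /kth_smallest; congr nth.
    apply/perm_sortP; [exact: le_total|exact: le_trans|exact: le_anti|].
    rewrite /image_mem (map_comp (fun i => Rs i w) sg); apply: perm_map.
    apply: perm_map_perm; first exact: enum_uniq.
    move=> x; rewrite !mem_enum tperm_mem ?setU11 //.
    by rewrite setU1r // /Shat inE kC.
  rewrite QE ShatE /sg tpermL tpermR -/th Tj Tk.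
  by [].
have -> : (Rs k w > Qj alpha tau T Rs C j w) && (T k w <= th) && (Shat tau T U w == Su) = false.
  apply: negbTE; apply/negP => /andP[/andP[_ Tk] /eqP SE]; move/negP: nT; apply.
  by move: jSu; rewrite -SE /Shat inE Tk => /andP[_ ->].
apply: negbTE; apply/negP => /andP[/andP[_]]; rewrite /sg tpermR => Tj /eqP SE.
move/negP: nT; apply; rewrite Tj /=.
by move: jSu; rewrite -SE /Shat inE thE tpermL => /andP[_ ->].
Qed.
End Swap.
Section Exch.
Context {R : realType} {dO : measure_display} {Omega : measurableType dO}
  {dT : measure_display} {T : measurableType dT}.
Variables (N : nat) (P : probability Omega R) (Z : 'I_N -> Omega -> T).
Hypothesis hZ : iid P Z.

Lemma mZgen (f : 'I_N -> 'I_N) :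
  measurable_fun setT (fun w => [tuple Z (f i) w | i < N]).
Proof.
apply/measurable_fun_tnthP => i.
rewrite (_ : _ \o _ = Z (f i)); first exact: hZ.1.
by apply/funext => w /=; rewrite tnth_mktuple.
Qed.

Definition rect (B : 'I_N -> set T) : set (N.-tuple T) :=
  [set z | forall i, B i (tnth z i)].

Lemma rect_measurable B : (forall i, measurable (B i)) -> measurable (rect B).
Proof.
move=> mB.
rewrite (_ : rect B = \bigcap_(i in setT) (setT `&` (fun z : N.-tuple T => tnth z i) @^-1` B i)).
  apply: fin_bigcap_measurable; first exact: finite_finset.
  by move=> i _; exact: measurable_tnth.
by apply/seteqP; split => z /= H i; [move=> _; split|have [] := H i I].
Qed.

Definition Grect : set (set (N.-tuple T)) :=
  [set A | exists B : 'I_N -> set T, (forall i, measurable (B i)) /\ A = rect B].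

Lemma tuple_measurableE : measurable = <<s Grect >>.
Proof.
apply/seteqP; split; last first.
  apply: smallest_sub; first exact: sigma_algebra_measurable.
  by move=> _ [B [mB ->]]; exact: rect_measurable.
apply: smallest_sub; first exact: smallest_sigma_algebra.
move=> A HA.
have [i [B mB <-]] : exists i, preimage_set_system setT (fun z : N.-tuple T => tnth z i) measurable A.
  move: HA; apply: (big_ind (fun X : set (set (N.-tuple T)) => X A -> exists i, _)).
  - by [].
  - by move=> X Y HX HY [/HX|/HY].
  - by move=> i _ H; exists i.
apply: sub_sigma_algebra; exists (fun i' => if i' == i then B else setT); split.
  by move=> i'; case: ifP.
apply/seteqP; split => z /=.
  by move=> [_ Bz] i'; case: eqP => [->|].
by move=> /(_ i); rewrite eqxx.
Qed.

Lemma exch (s : {perm 'I_N}) (A : set (N.-tuple T)) : measurable A ->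
  P ((fun w => [tuple Z i w | i < N]) @^-1` A) =
  P ((fun w => [tuple Z (s i) w | i < N]) @^-1` A).
Proof.
move=> mA.
have m1 := mZgen id.
have m2 := mZgen s.
change (pushforward P (fun w => [tuple Z i w | i < N]) A = pushforward P (fun w => [tuple Z (s i) w | i < N]) A).
apply: (measure_unique Grect (fun=> setT) tuple_measurableE) => //.
- move=> _ _ [B [mB ->]] [B' [mB' ->]]; exists (fun i => B i `&` B' i); split.
    by move=> i; exact: measurableI.
  by apply/seteqP; split => z /=; [move=> [H1 H2] i; split|move=> H; split => i; have [] := H i].
- by exists (fun=> setT); split => //; apply/seteqP; split.
- by apply/seteqP; split => // z _; exists 0%N.
- move=> _ [B [mB ->]].
  rewrite /pushforward.
  have [_ [ind idd]] := hZ.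
  have E1 : (fun w => [tuple Z i w | i < N]) @^-1` rect B =
            \bigcap_(i in [set: 'I_N]) (Z i @^-1` B i).
    by apply/seteqP; split => w /= H i; [move=> _; move: (H i); rewrite tnth_mktuple|rewrite tnth_mktuple; exact: H].
  have E2 : (fun w => [tuple Z (s i) w | i < N]) @^-1` rect B =
            \bigcap_(i in [set: 'I_N]) (Z i @^-1` B ((s^-1)%g i)).
    apply/seteqP; split => w /= H i.
      by move=> _; move: (H ((s^-1)%g i)); rewrite tnth_mktuple permKV.
    by rewrite tnth_mktuple; have := H (s i) I; rewrite permK.
  change (P ((fun w => [tuple Z i w | i < N]) @^-1` rect B) = P ((fun w => [tuple Z (s i) w | i < N]) @^-1` rect B)).
  rewrite E1 E2 ind // ind; last by move=> i; exact: mB.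
  rewrite [in RHS](reindex_inj (@perm_inj _ s)) /=.
  apply: eq_bigr => i _; rewrite permK; exact: idd.
- move=> _; change (P ((fun w => [tuple Z i w | i < N]) @^-1` setT) < +oo)%E.
  by rewrite preimage_setT probability_setT ltry.
Qed.
End Exch.

Section Meas.
Context {R : realType} {dT : measure_display} {TT : measurableType dT}.

Lemma mboolR (b : TT -> bool) : measurable_fun setT b ->
  measurable_fun setT (fun z => ((b z : bool) : nat)%:R : R).
Proof.
move=> mb.
rewrite (_ : (fun z => _) = \1_(b @^-1` [set true])).
  apply: measurable_indic; rewrite -(setTI (b @^-1` _)); exact: mb.
apply/funext => z; rewrite indicE; case: (boolP (b z)) => bz.
  by rewrite mem_set.
by rewrite memNset //= => /= H; move: bz; rewrite H.
Qed.

Lemma mall (I : Type) (e : seq I) (Pz : I -> TT -> bool) :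
  (forall i, measurable_fun setT (Pz i)) ->
  measurable_fun setT (fun z => all (Pz ^~ z) e).
Proof.
move=> mP; elim: e => [|a e IH] /=; first exact: measurable_cst.
exact: measurable_and.
Qed.

Lemma mhas (I : Type) (e : seq I) (Pz : I -> TT -> bool) :
  (forall i, measurable_fun setT (Pz i)) ->
  measurable_fun setT (fun z => has (Pz ^~ z) e).
Proof.
move=> mP; elim: e => [|a e IH] /=; first exact: measurable_cst.
exact: measurable_or.
Qed.

Lemma meqb (b : TT -> bool) (c : bool) : measurable_fun setT b ->
  measurable_fun setT (fun z => b z == c).
Proof.
move=> mb; case: c.
  by rewrite (_ : (fun z => _) = b) //; apply/funext => z; rewrite eqb_id.
by rewrite (_ : (fun z => _) = (fun z => ~~ b z)); [exact: measurable_neg|apply/funext => z; rewrite eqbF_neg].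
Qed.

Lemma mcount (I : Type) (e : seq I) (Pz : I -> TT -> bool) :
  (forall i, measurable_fun setT (Pz i)) ->
  forall p, measurable_fun setT (fun z => (p < count (Pz ^~ z) e)%N).
Proof.
move=> mP; elim: e => [|a e IH] p /=; first exact: measurable_cst.
rewrite (_ : (fun z => _) = (fun z => (Pz a z && ((p == 0)%N || (p.-1 < count (Pz^~ z) e)%N))
   || (~~ Pz a z && (p < count (Pz^~ z) e)%N))).
  apply: measurable_or; apply: measurable_and => //.
  - by apply: measurable_or => //; exact: measurable_cst.
  - exact: measurable_neg.
apply/funext => z; case: (Pz a z) => /=; last by [].
by rewrite orbF add1n; case: p => [|p] //; rewrite ltnS.
Qed.

Lemma integ_measurable {N : nat} (alpha : R) (tau : N.-tuple R -> R)
  (T Rs : 'I_N -> TT -> R) (C U Su : {set 'I_N}) (j k a : 'I_N) :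
  measurable_fun setT tau -> (forall i, measurable_fun setT (T i)) ->
  (forall i, measurable_fun setT (Rs i)) ->
  measurable_fun setT (integ alpha tau T Rs C U Su j k a).
Proof.
move=> mtau mT mRs.
have mth : measurable_fun setT (tauhat tau T).
  apply: measurableT_comp => //; apply/measurable_fun_tnthP => i.
  rewrite (_ : _ \o _ = T i) //; apply/funext => z /=; exact: tnth_mktuple.
have mle : forall i, measurable_fun setT (fun z => T i z <= tauhat tau T z).
  by move=> i; exact: measurable_fun_ler.
have mSh : forall A S, measurable_fun setT (fun z => Shat tau T A z == S).
  move=> A S.
  rewrite (_ : (fun z => _) = (fun z => all (fun i => ((i \in A) && (T i z <= tauhat tau T z)) == (i \in S)) (enum 'I_N))).
    apply: (@mall _ _ (fun i z => ((i \in A) && (T i z <= tauhat tau T z)) == (i \in S))) => i.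
    apply: meqb; apply: measurable_and => //; exact: measurable_cst.
  apply/funext => z; apply/eqP/allP => [<- i _|H]; first by rewrite /Shat inE.
  by apply/setP => i; rewrite /Shat inE; apply/eqP/H; rewrite mem_enum.
have mQ : measurable_fun setT (fun z => Qj alpha tau T Rs C j z < Rs a z).
  set K := fun S : {set 'I_N} => (`|Num.ceil ((1 - alpha) * (#|S|%:R + 1))|%N).-1.
  rewrite (_ : (fun z => _) = (fun z => has (fun S => (Shat tau T C z == S) &&
      (if (K S < #|j |: S|)%N then (K S < count (fun i => (Rs i z < Rs a z)%R) (enum (j |: S)))%N
       else 0 < Rs a z)) (enum {set 'I_N}))).
    apply: (@mhas _ _ (fun S z => (Shat tau T C z == S) &&
      (if (K S < #|j |: S|)%N then (K S < count (fun i => (Rs i z < Rs a z)%R) (enum (j |: S)))%N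
       else 0 < Rs a z))) => S.
    apply: measurable_and => //; case: (K S < #|j |: S|)%N.
      by apply: (@mcount _ _ (fun i z => (Rs i z < Rs a z)%R)) => i; exact: measurable_fun_ltr.
    by apply: measurable_fun_ltr => //; exact: measurable_cst.
  apply/funext => z.
  have key : forall S, Shat tau T C z = S -> (Qj alpha tau T Rs C j z < Rs a z) =
     (if (K S < #|j |: S|)%N then (K S < count (fun i => (Rs i z < Rs a z)%R) (enum (j |: S)))%N
       else 0 < Rs a z).
    move=> S SE.
    rewrite /Qj /kth_smallest SE -/(K _).
    case: ifP => KS.
      rewrite kth_lt; last by rewrite size_map -cardE.
      by rewrite /image_mem count_map.
    by rewrite nth_default // size_sort size_map -cardE leqNgt KS.
  apply/idP/hasP => [H|[S _ /andP[/eqP SE H]]].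
    exists (Shat tau T C z); first by rewrite mem_enum.
    by rewrite eqxx /= -key.
  by rewrite (key S SE).
pose dn := fun z => (\sum_(i in j |: C) ((T i z <= tauhat tau T z)%R : nat))%N.
have dnN : forall z, (dn z < N.+1)%N.
  move=> z; rewrite ltnS; apply: leq_trans (_ : (\sum_(i in j |: C) 1)%N <= N)%N.
    by apply: leq_sum => i _; exact: leq_b1.
  by rewrite sum1_card; apply: leq_trans (max_card _) _; rewrite card_ord.
rewrite (_ : integ alpha tau T Rs C U Su j k a = fun z =>
   (((Qj alpha tau T Rs C j z < Rs a z) && (T k z <= tauhat tau T z)
      && (Shat tau T U z == Su)) : nat)%:R *
   \sum_(c < N.+1) (((dn z == c) : bool) : nat)%:R * (c%:R)^-1).
  apply: measurable_funM.
    by apply: mboolR; apply: measurable_and => //; exact: measurable_and.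
  apply: measurable_sum => c; apply: measurable_funM; last exact: measurable_cst.
  apply: mboolR.
  rewrite (_ : (fun z => dn z == c) = (fun z => (dn z)%:R == (c : nat)%:R :> R)); last first.
    by apply/funext => z; rewrite eqr_nat.
  apply: measurable_fun_eqr; last exact: measurable_cst.
  rewrite /dn; under eq_fun do rewrite natr_sum big_mkcond /=.
  apply: measurable_sum => i; case: (i \in j |: C); last exact: measurable_cst.
  exact: mboolR.
apply/funext => z; rewrite /integ; congr (_ * _).
rewrite -natr_sum -/(dn z).
rewrite (bigD1 (Ordinal (dnN z))) //= eqxx mul1r big1 ?addr0 // => c cne.
rewrite (_ : (dn z == c) = false) ?mul0r //; apply: negbTE; apply: contra cne => /eqP E.
by apply/eqP/val_inj.
Qed.
End Meas.

Theorem lemma9 (R : realType) (dO : measure_display) (Omega : measurableType dO)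
  (P : probability Omega R) (d n m : nat)
  (C U : {set 'I_(n + m)})
  (X : 'I_(n + m) -> Omega -> d.-tuple R) (Y : 'I_(n + m) -> Omega -> R)
  (muhat g : d.-tuple R -> R) (tau : (n + m).-tuple R -> R) (alpha : R)
  (Su : {set 'I_(n + m)}) (j k : 'I_(n + m)) :
  #|C| = n -> #|U| = m -> [disjoint C & U]%bool ->
  iid P (fun i w => (X i w, Y i w)) ->
  measurable_fun setT muhat -> measurable_fun setT g ->
  measurable_fun setT tau ->
  (forall s s' : (n + m).-tuple R, perm_eq s s' -> tau s = tau s') ->
  0 < alpha < 1 ->
  Su \subset U -> j \in Su -> k \in C ->
  let T := fun i w => g (X i w) in
  let Rs := fun i w => (`|Y i w - muhat (X i w)| : R) in
  let th := tauhat tau T in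
  let den := fun w => \sum_(i in j |: C) ((T i w <= th w)%R : bool)%:R in
  (\int[P]_w ((((Rs j w > Qj alpha tau T Rs C j w)%R && (T k w <= th w)%R
                 && (Shat tau T U w == Su)) : bool)%:R / den w)%:E =
   \int[P]_w ((((Rs k w > Qj alpha tau T Rs C j w)%R && (T k w <= th w)%R
                 && (Shat tau T U w == Su)) : bool)%:R / den w)%:E)%E.
Proof.
move=> _ _ _ hZ mmu mg mtau tauP _ SuU jSu kC T Rs th den.
have jU : j \in U by move/fintype.subsetP: SuU; apply.
pose Z := fun i w => (X i w, Y i w).
pose TT := (n + m).-tuple (d.-tuple R * R)%type.
pose Tz := fun i (z : TT) => g (tnth z i).1.
pose Rz := fun i (z : TT) => (`|(tnth z i).2 - muhat (tnth z i).1| : R).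
pose F := integ alpha tau Tz Rz C U Su j k j.
have mTz : forall i, measurable_fun setT (Tz i).
  move=> i; apply: measurableT_comp => //; apply: measurableT_comp => //.
  exact: measurable_tnth.
have mRz : forall i, measurable_fun setT (Rz i).
  move=> i; apply: measurableT_comp; first exact: normr_measurable.
  apply: measurable_funB.
    by apply: measurableT_comp => //; exact: measurable_tnth.
  apply: measurableT_comp => //; apply: measurableT_comp => //.
  exact: measurable_tnth.
have mF : measurable_fun setT F by apply: integ_measurable.
pose sg := tperm j k.
pose Zt := fun w => [tuple Z i w | i < n + m].
pose Zs := fun w => [tuple Z (sg i) w | i < n + m].
have mZt : measurable_fun setT Zt := mZgen _ _ _ hZ id.
have mZs : measurable_fun setT Zs := mZgen _ _ _ hZ sg.
have F0 : forall z, (0 <= F z)%R.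
  move=> z; rewrite /F /integ; apply: divr_ge0; first exact: ler0n.
  by apply: sumr_ge0 => i _; exact: ler0n.
have L : forall w, ((((Rs j w > Qj alpha tau T Rs C j w)%R && (T k w <= th w)%R
                 && (Shat tau T U w == Su)) : bool)%:R / den w) = F (Zt w).
  move=> w.
  have E1 : (fun i (_ : TT) => T i w) = (fun i _ => Tz i (Zt w)).
    by apply/funext => i; apply/funext => z; rewrite /Tz tnth_mktuple.
  have E2 : (fun i (_ : TT) => Rs i w) = (fun i _ => Rz i (Zt w)).
    by apply/funext => i; apply/funext => z; rewrite /Rz tnth_mktuple.
  transitivity (integ alpha tau (fun i (_ : TT) => T i w) (fun i _ => Rs i w) C U Su j k j (Zt w)).
    by [].
  by rewrite E1 E2.
have Rr : forall w, ((((Rs k w > Qj alpha tau T Rs C j w)%R && (T k w <= th w)%R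
                 && (Shat tau T U w == Su)) : bool)%:R / den w) = F (Zs w).
  move=> w.
  have E1 : (fun i (_ : TT) => T (sg i) w) = (fun i _ => Tz i (Zs w)).
    by apply/funext => i; apply/funext => z; rewrite /Tz tnth_mktuple.
  have E2 : (fun i (_ : TT) => Rs (sg i) w) = (fun i _ => Rz i (Zs w)).
    by apply/funext => i; apply/funext => z; rewrite /Rz tnth_mktuple.
  transitivity (integ alpha tau T Rs C U Su j k k w); first by [].
  rewrite -integ_swap //.
  transitivity (integ alpha tau (fun i (_ : TT) => T (sg i) w) (fun i _ => Rs (sg i) w) C U Su j k j (Zs w)).
    by [].
  by rewrite E1 E2.
under eq_integral do rewrite L.
under [RHS]eq_integral do rewrite Rr.
have P1 : forall phi, measurable_fun setT phi ->
   (\int[P]_w (F (phi w))%:E = \int[pushforward P phi]_y (F y)%:E)%E.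
  move=> phi mphi.
  rewrite ge0_integral_pushforward //.
  - exact/measurable_EFinP.
  - by move=> y _; rewrite lee_fin.
rewrite (P1 _ mZt) (P1 _ mZs).
apply: eq_measure_integral => A mA _.
exact: exch.
Qed.
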